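(* (i) There exists a measurable map $\Psi:\Gamma\to B$ such that for every $a\in\Gamma$, $\beta=\Psi(a)$ satisfies $a=\sigma\sigma'+\sigma\beta+\beta'\sigma'$. (ii) There exists a measurable map $\Phi:B\to\prod_{i=1}^d[-\kappa^-_i,\kappa^+_i]$ such that $v_i\beta+\Phi(\beta)\in\prod_{j=1}^d[-\kappa^-_j,\kappa^+_j]$ for all $i=1,\dots,d+1$ and all $\beta\in B$.
   Context: Let $\sigma$ be an invertible $d\times d$ matrix, $\kappa^\pm_i\ge0$ for $i=1,\dots,d$, and $v_1,\dots,v_{d+1}\in\mathbb{R}^d$ row vectors forming a regular simplex with $\langle v_i,v_j\rangle=-1$ ($i\ne j$), $\sum_j v_j=0$, $\sum_j v_j'v_j=(d+1)I$. $B$ is the set of $d\times d$ matrices $\beta=[\beta_1\cdots\beta_d]$ whose $k$-th column is $\beta_k=\sum_{j=1}^{d+1}w_{jk}v_j'$ for some $w_{jk}\in[0,(\kappa^+_k+\kappa^-_k)/(d+1)]$, and $\Gamma=\{\sigma\sigma'+\sigma\beta+\beta'\sigma':\beta\in B\}$. $v_i\beta$ is the row vector obtained by multiplying the row vector $v_i$ by $\beta$. *)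

(* Defs.v *)
From HB Require Import structures.
From mathcomp Require Import all_boot all_order all_algebra.
From mathcomp Require Import all_classical all_reals all_analysis.
Set Implicit Arguments. Unset Strict Implicit. Unset Printing Implicit Defensive.
Import Order.TTheory GRing.Theory Num.Theory.
Import numFieldNormedType.Exports.
Local Open Scope classical_set_scope.
Local Open Scope ring_scope.

Definition borel_set (T : topologicalType) (A : set T) : Prop := <<s open >> A.

Definition borel_measurable_on (T U : topologicalType) (D : set T) (f : T -> U) : Prop :=
  forall V : set U, open V -> borel_set (D `&` f @^-1` V).

Definition Bset (R : realType) (d : nat) (v : 'I_d.+1 -> 'rV[R]_d)
  (kp km : 'I_d -> R) : set 'M[R]_d :=
  [set beta | exists w : 'I_d.+1 -> 'I_d -> R,
     (forall j k, 0 <= w j k <= (kp k + km k) / d.+1%:R) /\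
     (forall k, col k beta = \sum_(j < d.+1) w j k *: (v j)^T)].

Definition Gammaset (R : realType) (d : nat) (sigma : 'M[R]_d) (Bs : set 'M[R]_d)
  : set 'M[R]_d :=
  [set sigma *m sigma^T + sigma *m beta + beta^T *m sigma^T | beta in Bs].

Definition box (R : realType) (d : nat) (kp km : 'I_d -> R) : set 'rV[R]_d :=
  [set x | forall j, - km j <= x ord0 j <= kp j].

(* Main.v *)
Require Import Defs.
From HB Require Import structures.
From mathcomp Require Import all_boot all_order all_algebra.
From mathcomp Require Import all_classical all_reals all_analysis.
From mathcomp Require Import lra ring.
Import Order.TTheory GRing.Theory Num.Theory.
Import numFieldNormedType.Exports.
Local Open Scope classical_set_scope.
Local Open Scope ring_scope.



Lemma near_fin {T : Type} {I : finType} (F : set_system T) {FF : Filter F}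
  (P : I -> T -> Prop) : (forall i, F (P i)) -> F (fun y => forall i, P i y).
Proof.
move=> HP.
suff H : forall s : seq I, F (fun y => forall i, i \in s -> P i y).
  by apply: filterS (H (enum I)) => y Hy i; apply: Hy; rewrite mem_enum.
elim=> [|a s IH]; first by apply: filterS filterT.
apply: filterS (filterI (HP a) IH) => y [Pa Ps] i.
by rewrite inE => /orP[/eqP->//|/Ps].
Qed.

Lemma mx_cont {R : realType} {T : topologicalType} m n (f : T -> 'M[R]_(m, n)) :
  (forall i j, continuous (fun x => f x i j)) -> continuous f.
Proof.
move=> fc x; apply/cvg_ballP => e e0.
have H : forall ij : 'I_m * 'I_n, \forall y \near x, ball (f x ij.1 ij.2) e (f y ij.1 ij.2).
  move=> [i j] /=; have := fc i j x; move/cvg_ballP; exact.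
apply: filterS (@near_fin _ _ _ _ _ H) => y Hy; split => // i j; exact: (Hy (i, j)).
Qed.

Lemma sum_cont {R : realType} {T : topologicalType} (I : finType) (f : I -> T -> R) :
  (forall i, continuous (f i)) -> continuous (fun x => \sum_i f i x).
Proof.
move=> fc.
suff H : forall s : seq I, continuous (fun x => \sum_(i <- s) f i x).
  exact: H.
elim=> [|a s IH].
  have -> : (fun x => \sum_(i <- [::]) f i x) = fun=> 0.
    by apply/funext => y; rewrite big_nil.
  exact: cst_continuous.
have -> : (fun x => \sum_(i <- a :: s) f i x) = f a \+ (fun x => \sum_(i <- s) f i x).
  by apply/funext => y; rewrite big_cons.
move=> x; apply: continuousD; [exact: fc|exact: IH].
Qed.

Lemma coord_cont {R : realType} m n (i : 'I_m) (j : 'I_n) :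
  continuous (fun M : 'M[R]_(m, n) => M i j).
Proof. exact: coord_continuous. Qed.

Lemma scal_coord_cont {R : realType} m n (a : R) (i : 'I_m) (j : 'I_n) :
  continuous (fun M : 'M[R]_(m, n) => a * M i j).
Proof.
move=> x.
have H1 := (@cst_continuous _ _ a x).
have H2 := (@coord_continuous R _ _ i j x).
exact: (continuousM H1 H2).
Qed.

Lemma sq_coord_cont {R : realType} m n (i : 'I_m) (j : 'I_n) :
  continuous (fun M : 'M[R]_(m, n) => M i j ^+ 2).
Proof.
have -> : (fun M : 'M[R]_(m, n) => M i j ^+ 2) = (fun M => M i j * M i j).
  by apply/funext => M; rewrite expr2.
move=> x.
have H2 := (@coord_continuous R _ _ i j x).
exact: (continuousM H2 H2).
Qed.

Lemma closed_le_cont {R : realType} {T : topologicalType} (h : T -> R) (c : R) :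
  continuous h -> closed [set x | h x <= c].
Proof.
move=> hc.
have -> : [set x | h x <= c] = ~` (h @^-1` [set y | c < y]).
  by apply/seteqP; split => x /=; rewrite leNgt => /negP.
apply: open_closedC; apply: open_comp; last exact: open_gt.
by move=> x _; exact: hc.
Qed.

Lemma mx_box_compact {R : realType} m n (N : R) :
  compact [set M : 'M[R]_(m, n) | forall i j, - N <= M i j <= N].
Proof.
have C := @rV_compact _ (m * n)%N (fun=> `[(- N), N]%classic)
  (fun=> @segment_compact R _ _).
have -> : [set M : 'M[R]_(m, n) | forall i j, - N <= M i j <= N] =
  vec_mx @` [set v : 'rV[R]_(m * n) | forall i, `[(- N), N]%classic (v ord0 i)].
  apply/seteqP; split => [M HM|_ [v Hv <-]].
    exists (mxvec M); last exact: mxvecK.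
    move=> k; case/mxvec_indexP: k => i j; rewrite mxvecE /= in_itv /=.
    exact: HM.
  move=> i j; rewrite mxE; have := Hv (mxvec_index i j).
  by rewrite /= in_itv.
apply: continuous_compact => //; apply: continuous_subspaceT.
apply: mx_cont => i j.
have -> : (fun x : 'rV[R]_(m * n) => vec_mx x i j) = (fun x => x ord0 (mxvec_index i j)).
  by apply/funext => x; rewrite mxE.
exact: coord_cont.
Qed.



Definition xv {R : realType} {d : nat} (v : 'I_d.+1 -> 'rV[R]_d) (b : 'M[R]_d) i k :=
  (v i *m b) ord0 k.

Lemma gram_diag {R : realType} d (v : 'I_d.+1 -> 'rV[R]_d) :
  (forall i j, i != j -> v i *m (v j)^T = (-1)%:M) ->
  \sum_(j < d.+1) v j = 0 ->
  forall i, (v i *m (v i)^T) ord0 ord0 = d%:R.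
Proof.
move=> H1 H2 i.
have : (v i *m (\sum_(j < d.+1) v j)^T) ord0 ord0 = 0.
  by rewrite H2 trmx0 mulmx0 mxE.
rewrite linear_sum /= mulmx_sumr summxE (bigD1 i) //=.
rewrite (eq_bigr (fun=> -1)); last first.
  by move=> j ji; rewrite H1 1?eq_sym // mxE eqxx /= mulr1n.
rewrite sumr_const cardC1 card_ord /= => /eqP; rewrite addr_eq0 => /eqP ->.
by rewrite -mulNrn opprK.
Qed.

Lemma xv_col {R : realType} d (v : 'I_d.+1 -> 'rV[R]_d) (b : 'M[R]_d) i k :
  xv v b i k = (v i *m col k b) ord0 ord0.
Proof. by rewrite /xv !mxE; apply: eq_bigr => t _; rewrite mxE. Qed.

Lemma xv_repr {R : realType} d (v : 'I_d.+1 -> 'rV[R]_d) (b : 'M[R]_d)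
  (w : 'I_d.+1 -> 'I_d -> R) k j :
  (forall i j, i != j -> v i *m (v j)^T = (-1)%:M) ->
  \sum_(j < d.+1) v j = 0 ->
  col k b = \sum_(l < d.+1) w l k *: (v l)^T ->
  xv v b j k = w j k * d.+1%:R - \sum_(l < d.+1) w l k.
Proof.
move=> H1 H2 Hc.
rewrite xv_col Hc mulmx_sumr summxE (bigD1 j) //= -scalemxAr mxE gram_diag //.
rewrite (eq_bigr (fun l => - w l k)); last first.
  move=> l lj; rewrite -scalemxAr mxE H1 1?eq_sym //.
  by rewrite /scalar_mx mxE eqxx mulr1n mulrN1.
rewrite -sumrN [in RHS](bigD1 j) //=.
have -> : (d.+1%:R : R) = d%:R + 1 by rewrite natr1.
rewrite mulrDr mulr1; lra.
Qed.

Lemma exists_min {R : realType} (I : finType) (i0 : I) (F : I -> R) :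
  exists j, forall i, F j <= F i.
Proof.
case: (@arg_minP _ _ I i0 predT F isT) => j _ H; exists j => i; exact: H.
Qed.

Definition Bsp {R : realType} {d : nat} (v : 'I_d.+1 -> 'rV[R]_d)
  (kp km : 'I_d -> R) : set 'M[R]_d :=
  [set b | forall k i j, xv v b j k - xv v b i k <= kp k + km k].

Lemma Bset_Bsp {R : realType} d (v : 'I_d.+1 -> 'rV[R]_d) kp km b :
  (forall i j, i != j -> v i *m (v j)^T = (-1)%:M) ->
  \sum_(j < d.+1) v j = 0 ->
  Bset v kp km b -> Bsp v kp km b.
Proof.
move=> H1 H2 [w [Hw Hc]] k i j.
rewrite (@xv_repr _ _ _ _ _ k j H1 H2 (Hc k)) (@xv_repr _ _ _ _ _ k i H1 H2 (Hc k)).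
have D0 : (0 : R) < d.+1%:R by rewrite ltr0n.
have /andP[_ Hj] := Hw j k; have /andP[Hi _] := Hw i k.
rewrite ler_pdivlMr // in Hj.
have : 0 <= w i k * d.+1%:R by rewrite mulr_ge0 // ltW.
lra.
Qed.

Lemma Bsp_Bset {R : realType} d (v : 'I_d.+1 -> 'rV[R]_d) kp km b :
  (forall i j, i != j -> v i *m (v j)^T = (-1)%:M) ->
  \sum_(j < d.+1) v j = 0 ->
  \sum_(j < d.+1) (v j)^T *m v j = d.+1%:R%:M ->
  Bsp v kp km b -> Bset v kp km b.
Proof.
move=> H1 H2 H3 Hb.
have D0 : (0 : R) < d.+1%:R by rewrite ltr0n.
pose i0 k := proj1_sig (cid (@exists_min _ _ ord0 (fun i => xv v b i k))).
have Hi0 k i : xv v b (i0 k) k <= xv v b i k.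
  exact: (proj2_sig (cid (@exists_min _ _ ord0 (fun i => xv v b i k)))).
exists (fun j k => (xv v b j k - xv v b (i0 k) k) / d.+1%:R); split.
  move=> j k; apply/andP; split.
    by rewrite divr_ge0 ?subr_ge0 // ltW.
  by apply: ler_wpM2r; [rewrite invr_ge0 ltW|exact: Hb].
move=> k.
have E1 j : xv v b j k *: (v j)^T = (v j)^T *m (v j *m col k b).
  by rewrite [v j *m col k b]mx11_scalar mul_mx_scalar xv_col.
have E2 : \sum_(j < d.+1) xv v b j k *: (v j)^T = d.+1%:R *: col k b.
  rewrite (eq_bigr _ (fun j _ => E1 j)).
  under eq_bigr do rewrite mulmxA.
  by rewrite -mulmx_suml H3 mul_scalar_mx.
rewrite (eq_bigr (fun j => (d.+1%:R)^-1 *: (xv v b j k *: (v j)^T)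
   - (xv v b (i0 k) k / d.+1%:R) *: (v j)^T)); last first.
  by move=> j _; rewrite mulrBl scalerBl scalerA mulrC.
rewrite sumrB -scaler_sumr E2 -scaler_sumr -linear_sum /= H2 trmx0 scaler0 subr0.
by rewrite scalerA mulVf ?scale1r // gt_eqF.
Qed.



Lemma xv_cont {R : realType} d (v : 'I_d.+1 -> 'rV[R]_d) i k :
  continuous (fun b => xv v b i k).
Proof.
have -> : (fun b => xv v b i k) = (fun b => \sum_t v i ord0 t * b t k).
  by apply/funext => b; rewrite /xv mxE.
apply: sum_cont => t; exact: scal_coord_cont.
Qed.

Lemma Bsp_closed {R : realType} d (v : 'I_d.+1 -> 'rV[R]_d) kp km :
  closed (Bsp v kp km).
Proof.
have -> : Bsp v kp km = \bigcap_(t in [set: 'I_d * 'I_d.+1 * 'I_d.+1])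
   [set b | xv v b t.2 t.1.1 - xv v b t.1.2 t.1.1 <= kp t.1.1 + km t.1.1].
  apply/seteqP; split => b Hb.
    by move=> [[k i] j] _ /=; exact: Hb.
  by move=> k i j; exact: (Hb (k, i, j)).
apply: closed_bigI => t _; apply: closed_le_cont => x.
have H1 := xv_cont _ v t.2 t.1.1 x; have H2 := xv_cont _ v t.1.2 t.1.1 x.
exact: (continuousB H1 H2).
Qed.

Lemma le_sum1 {R : realType} (I : finType) (F : I -> R) i :
  (forall j, 0 <= F j) -> F i <= \sum_j F j.
Proof.
move=> H; rewrite (bigD1 i) //= lerDl; exact: sumr_ge0.
Qed.

Lemma Bset_box {R : realType} d (v : 'I_d.+1 -> 'rV[R]_d) kp km b :
  (forall i, 0 <= kp i) -> (forall i, 0 <= km i) ->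
  Bset v kp km b ->
  forall t k, - (\sum_(k' < d) \sum_(l < d.+1) \sum_(t' < d)
     (kp k' + km k') / d.+1%:R * `|v l ord0 t'|) <= b t k <=
     \sum_(k' < d) \sum_(l < d.+1) \sum_(t' < d)
     (kp k' + km k') / d.+1%:R * `|v l ord0 t'|.
Proof.
move=> Hkp Hkm [w [Hw Hc]] t k; rewrite -ler_norml.
have -> : b t k = (col k b) t ord0 by rewrite mxE.
rewrite Hc summxE.
have cc : 0 <= (kp k + km k) / d.+1%:R by rewrite divr_ge0 // addr_ge0.
apply: le_trans (ler_norm_sum _ _ _) _.
apply: le_trans (_ : \sum_(l < d.+1) (kp k + km k) / d.+1%:R * `|v l ord0 t| <= _).
  apply: ler_sum => l _; rewrite !mxE normrM ger0_norm //.
    by apply: ler_wpM2r => //; have /andP[] := Hw l k.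
  by have /andP[] := Hw l k.
apply: le_trans (_ : \sum_(l < d.+1) \sum_(t' < d) (kp k + km k) / d.+1%:R * `|v l ord0 t'| <= _).
  apply: ler_sum => l _; apply: (@le_sum1 _ _ (fun t' => (kp k + km k) / d.+1%:R * `|v l ord0 t'|) t).
  by move=> j; rewrite mulr_ge0.
apply: (@le_sum1 _ _ (fun k' => \sum_(l < d.+1) \sum_(t' < d) (kp k' + km k') / d.+1%:R * `|v l ord0 t'|) k).
move=> k'; apply: sumr_ge0 => l _; apply: sumr_ge0 => t' _.
by rewrite mulr_ge0 // divr_ge0 // addr_ge0.
Qed.




Local Notation MT R n := (g_sigma_algebraType (@open 'M[R]_n)).

Lemma bs_open {R : realType} n (A : set 'M[R]_n) : open A -> borel_set A.
Proof. by move=> oA; apply: sub_sigma_algebra. Qed.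

Lemma bs_closed {R : realType} n (A : set 'M[R]_n) : closed A -> borel_set A.
Proof.
move=> cA; rewrite -(setCK A); apply: sigma_algebraC; apply: bs_open.
exact: closed_openC.
Qed.

Lemma bs_setD {R : realType} n (A B : set 'M[R]_n) :
  borel_set A -> borel_set B -> borel_set (A `\` B).
Proof.
move=> mA mB.
exact: (@measurableD _ (MT R n) A B mA mB).
Qed.

Lemma bs_setI {R : realType} n (A B : set 'M[R]_n) :
  borel_set A -> borel_set B -> borel_set (A `&` B).
Proof.
move=> mA mB.
exact: (@measurableI _ (MT R n) A B mA mB).
Qed.

Lemma bs_bigcup_rat {R : realType} n (F : rat -> set 'M[R]_n) :
  (forall q, borel_set (F q)) -> borel_set (\bigcup_q F q).
Proof.
move=> mF.
exact: (@bigcupT_measurable_rat _ (MT R n) F mF).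
Qed.


Lemma mx_hausdorff {R : realType} n : hausdorff_space 'M[R]_n.
Proof. exact: norm_hausdorff. Qed.

Lemma closed_image {R : realType} n (K : set 'M[R]_n) (T : 'M[R]_n -> 'M[R]_n) :
  compact K -> continuous T -> closed (T @` K).
Proof.
move=> cK cT; apply: compact_closed; first exact: mx_hausdorff.
apply: continuous_compact => //; exact: continuous_subspaceT.
Qed.

Lemma closed_fib {R : realType} n (T : 'M[R]_n -> 'M[R]_n) a :
  continuous T -> closed (T @^-1` [set a]).
Proof.
move=> cT; apply: preimage_closed; first by move=> x _; exact: cT.
apply: accessible_closed_set1; apply: hausdorff_accessible; exact: mx_hausdorff.
Qed.

Lemma EVT_min_mx {R : realType} n (A : set 'M[R]_n) (g : 'M[R]_n -> R) :
  A !=set0 -> compact A -> continuous g ->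
  exists2 c, A c & forall t, A t -> g c <= g t.
Proof.
move=> A0 cA cg.
have [c cA' H] := compact_EVT_min A0 cA (continuous_subspaceT cg).
exists c; first by rewrite inE in cA'.
by move=> t At; apply: H; rewrite inE.
Qed.

Lemma selection {R : realType} n (K : set 'M[R]_n) (T : 'M[R]_n -> 'M[R]_n)
  (g : 'M[R]_n -> R) :
  compact K -> continuous T -> continuous g ->
  (forall x y, K x -> K y -> T x = T y ->
     K (2^-1 *: (x + y)) /\ T (2^-1 *: (x + y)) = T x) ->
  (forall x y, x != y -> g (2^-1 *: (x + y)) < (g x + g y) / 2) ->
  exists Psi : 'M[R]_n -> 'M[R]_n, borel_measurable_on (T @` K) Psi /\
    forall a, (T @` K) a -> K (Psi a) /\ T (Psi a) = a.
Proof.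
move=> cK cT cg Hmid Hg.
pose fib a := K `&` T @^-1` [set a].
have cfib a : compact (fib a) := compact_closedI cK (@closed_fib _ _ T a cT).
pose P a b := fib a b /\ forall b', fib a b' -> g b <= g b'.
have exP a : (T @` K) a -> exists b, P a b.
  move=> [b0 Kb0 Tb0].
  have [c fc H] := @EVT_min_mx _ _ (fib a) g (ex_intro _ b0 (conj Kb0 Tb0)) (cfib a) cg.
  by exists c.
have uniq a b1 b2 : P a b1 -> P a b2 -> b1 = b2.
  move=> [[K1 T1] m1] [[K2 T2] m2]; apply/eqP; apply/negPn/negP => ne.
  have [Km Tm] := Hmid b1 b2 K1 K2 (etrans T1 (esym T2)).
  have h1 := Hg _ _ ne.
  have h2 := m1 _ (conj Km (etrans Tm T1)).
  have h3 := m1 _ (conj K2 T2).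
  have h4 := m2 _ (conj K1 T1).
  move: h1 h2 h3 h4; clear; lra.
pose Psi a := xget 0 (P a).
have HPsi a : (T @` K) a -> P a (Psi a) := fun h => xgetPex 0 (exP a h).
exists Psi; split; last first.
  by move=> a /HPsi [[? ?] _]; split.
have key F : closed F -> borel_set ((T @` K) `&` Psi @^-1` F).
  move=> cF.
  pose E (G : set 'M[R]_n) (q : rat) := T @` (K `&` G `&` [set b | g b <= ratr q]).
  have cE G q : closed G -> closed (E G q).
    move=> cG; apply: closed_image => //; rewrite -setIA.
    apply: compact_closedI cK _; apply: closedI cG _; exact: closed_le_cont.
  have -> : (T @` K) `&` Psi @^-1` F = (T @` K) `\` \bigcup_q (E setT q `\` E F q).
    apply/seteqP; split => a.
      move=> [aK PF]; split => // -[q _ [[b [[Kb _] gb] Tb] NE]]; apply: NE.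
      have [[KP TP] mP] := HPsi a aK.
      exists (Psi a) => //; split; first by split.
      by apply: le_trans gb; apply: mP; split.
    move=> [aK NU]; split => //; apply: contrapT => NF.
    have [[KP TP] mP] := HPsi a aK.
    apply: NU.
    case: (pselect (exists b, (fib a `&` F) b)) => [ex|nex].
      have [b' [[Kb' Tb'] Fb'] mb'] := @EVT_min_mx _ _ _ g ex (compact_closedI (cfib a) cF) cg.
      have lt : g (Psi a) < g b'.
        rewrite lt_neqAle mP ?andbT; last by split.
        apply/eqP => eq.
        have Pb' : P a b' by split; [split|move=> b'' fb''; rewrite -eq; exact: mP].
        by apply: NF; rewrite /= (uniq _ _ _ (HPsi a aK) Pb').
      have [q] := rat_in_itvoo lt; rewrite in_itv /= => /andP[q1 q2].
      exists q => //; split.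
        by exists (Psi a) => //; split => //; exact: ltW.
      move=> [b [[Kb Fb] gb] Tb].
      have := mb' b (conj (conj Kb Tb) Fb); move: gb q2 => /= gb q2 h.
      move: gb q2 h; clear; lra.
    have lt : g (Psi a) < g (Psi a) + 1 by rewrite ltrDl.
    have [q] := rat_in_itvoo lt; rewrite in_itv /= => /andP[q1 q2].
    exists q => //; split.
      by exists (Psi a) => //; split => //; exact: ltW.
    by move=> [b [[Kb Fb] _] Tb]; apply: nex; exists b.
  apply: (@bs_setD R n); first by apply: (@bs_closed R n); apply: closed_image.
  apply: (@bs_bigcup_rat R n) => q; apply: (@bs_setD R n); apply: (@bs_closed R n); apply: cE => //.
move=> V oV.
have -> : (T @` K) `&` Psi @^-1` V = (T @` K) `\` ((T @` K) `&` Psi @^-1` (~` V)).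
  apply/seteqP; split => a.
    by move=> [aK aV]; split => // -[_ /=]; apply.
  move=> [aK H]; split => //; apply: contrapT => nV; exact: H.
apply: (@bs_setD R n); first by apply: (@bs_closed R n); apply: closed_image.
by apply: key; apply: open_closedC.
Qed.



Definition Tm {R : realType} {d : nat} (s : 'M[R]_d) (b : 'M[R]_d) :=
  s *m s^T + s *m b + b^T *m s^T.
Definition gq {R : realType} {d : nat} (b : 'M[R]_d) : R :=
  \sum_i \sum_j b i j ^+ 2.

Lemma Tm_cont {R : realType} d (s : 'M[R]_d) : continuous (Tm s).
Proof.
apply: mx_cont => i j.
have -> : (fun b => Tm s b i j) = (fun b => (s *m s^T) i j +
   \sum_k s i k * b k j + \sum_k s^T k j * b k i).
  apply/funext => b; rewrite /Tm !mxE; congr (_ + _ + _).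
  by apply: eq_bigr => k _; rewrite mxE mulrC.
move=> x.
have H1 := @cst_continuous _ _ ((s *m s^T) i j) x.
have H2 := @sum_cont _ _ _ _ (fun k => @scal_coord_cont R d d (s i k) k j) x.
have H3 := @sum_cont _ _ _ _ (fun k => @scal_coord_cont R d d (s^T k j) k i) x.
have H12 := continuousD H1 H2.
exact: (continuousD H12 H3).
Qed.

Lemma gq_cont {R : realType} d : continuous (@gq R d).
Proof.
apply: sum_cont => i; apply: sum_cont => j; exact: sq_coord_cont.
Qed.

Lemma xv_mid {R : realType} d (v : 'I_d.+1 -> 'rV[R]_d) x y j k :
  xv v (2^-1 *: (x + y)) j k = 2^-1 * (xv v x j k + xv v y j k).
Proof. by rewrite /xv -scalemxAr mulmxDr !mxE. Qed.

Lemma Bsp_mid {R : realType} d (v : 'I_d.+1 -> 'rV[R]_d) kp km x y :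
  Bsp v kp km x -> Bsp v kp km y -> Bsp v kp km (2^-1 *: (x + y)).
Proof.
move=> Hx Hy k i j; rewrite !xv_mid.
have := Hx k i j; have := Hy k i j; lra.
Qed.

Lemma Tm_mid {R : realType} d (s : 'M[R]_d) x y :
  Tm s x = Tm s y -> Tm s (2^-1 *: (x + y)) = Tm s x.
Proof.
rewrite /Tm -!addrA => /addrI Exy.
congr (_ + _).
rewrite -scalemxAr mulmxDr [(2^-1 *: (x + y))^T]linearZ /= [(x + y)^T]linearD /=.
rewrite -scalemxAl mulmxDl -scalerDr addrACA -Exy scalerDr -scalerDl.
have -> : (2^-1 : R) + 2^-1 = 1 by lra.
by rewrite scale1r.
Qed.

Lemma gq_strict {R : realType} d (x y : 'M[R]_d) :
  x != y -> gq (2^-1 *: (x + y)) < (gq x + gq y) / 2.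
Proof.
move=> nxy.
have Eq1 : (gq x + gq y) / 2 = gq (2^-1 *: (x + y)) +
    \sum_i \sum_j ((x i j - y i j) ^+ 2 / 4).
  rewrite /gq -big_split /= mulr_suml -big_split /=.
  apply: eq_bigr => i _.
  rewrite -big_split mulr_suml -big_split /=.
  by apply: eq_bigr => j _; rewrite !mxE; field.
rewrite Eq1 ltrDl.
have [i [j nij]] : exists i j, x i j != y i j.
  apply: contrapT => H; move/negP: nxy; apply; apply/eqP/matrixP => i j.
  apply/eqP/negPn/negP => ne; apply: H; by exists i, j.
have pos : 0 < (x i j - y i j) ^+ 2 / 4.
  by rewrite divr_gt0 // exprn_even_gt0 //= subr_eq0.
apply: lt_le_trans pos _.
apply: le_trans (_ : \sum_j0 ((x i j0 - y i j0) ^+ 2 / 4) <= _).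
  apply: (@le_sum1 _ _ (fun j0 => (x i j0 - y i j0) ^+ 2 / 4) j).
  by move=> j0; rewrite divr_ge0 // sqr_ge0.
apply: (@le_sum1 _ _ (fun i0 => \sum_j0 ((x i0 j0 - y i0 j0) ^+ 2 / 4)) i).
by move=> i0; apply: sumr_ge0 => j0 _; rewrite divr_ge0 // sqr_ge0.
Qed.



Lemma min_cont {R : realType} {T : topologicalType} (I : Type) (s : seq I)
  (f0 : T -> R) (F : I -> T -> R) :
  continuous f0 -> (forall i, continuous (F i)) ->
  continuous (fun x => \big[Order.min/f0 x]_(i <- s) F i x).
Proof.
move=> c0 cF; elim: s => [|a s IH].
  have -> : (fun x => \big[Order.min/f0 x]_(i <- [::]) F i x) = f0.
    by apply/funext => y; rewrite big_nil.
  exact: c0.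
have -> : (fun x => \big[Order.min/f0 x]_(i <- a :: s) F i x) =
    (F a \min (fun x => \big[Order.min/f0 x]_(i <- s) F i x)).
  by apply/funext => y; rewrite big_cons.
move=> x; have H1 := cF a x; have H2 := IH x.
exact: (continuous_min H1 H2).
Qed.

Definition mn {R : realType} {d : nat} (v : 'I_d.+1 -> 'rV[R]_d) (b : 'M[R]_d) k :=
  \big[Order.min/xv v b ord0 k]_(i < d.+1) xv v b i k.

Lemma mn_le {R : realType} d (v : 'I_d.+1 -> 'rV[R]_d) b k i : mn v b k <= xv v b i k.
Proof. exact: bigmin_le. Qed.

Lemma mn_eq {R : realType} d (v : 'I_d.+1 -> 'rV[R]_d) b k : exists j, mn v b k = xv v b j k.
Proof.
rewrite /mn; apply: (big_ind (fun m => exists j, m = xv v b j k)).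
- by exists ord0.
- move=> m1 m2 [j1 ->] [j2 ->]; rewrite /Order.min.
  by case: ifP => _; [exists j1|exists j2].
- by move=> i _; exists i.
Qed.

Lemma mn_cont {R : realType} d (v : 'I_d.+1 -> 'rV[R]_d) k :
  continuous (fun b => mn v b k).
Proof.
apply: min_cont; first exact: xv_cont.
move=> i; exact: xv_cont.
Qed.

Definition Phi {R : realType} {d : nat} (v : 'I_d.+1 -> 'rV[R]_d) (km : 'I_d -> R)
  (b : 'M[R]_d) : 'rV[R]_d := \row_k (- km k - mn v b k).

Lemma Phi_cont {R : realType} d (v : 'I_d.+1 -> 'rV[R]_d) km : continuous (Phi v km).
Proof.
apply: mx_cont => i k.
have -> : (fun b => Phi v km b i k) = (fun b => - km k - mn v b k).
  by apply/funext => b; rewrite mxE.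
move=> x; have H1 := @cst_continuous _ _ (- km k) x; have H2 := mn_cont _ v k x.
exact: (continuousB H1 H2).
Qed.

Lemma xv_sum0 {R : realType} d (v : 'I_d.+1 -> 'rV[R]_d) b k :
  \sum_(j < d.+1) v j = 0 -> \sum_i xv v b i k = 0.
Proof.
move=> H2; rewrite /xv.
have -> : \sum_i (v i *m b) ord0 k = ((\sum_i v i) *m b) ord0 k.
  by rewrite mulmx_suml summxE.
by rewrite H2 mul0mx mxE.
Qed.

Lemma Phi_box {R : realType} d (v : 'I_d.+1 -> 'rV[R]_d) kp km b :
  \sum_(j < d.+1) v j = 0 -> Bsp v kp km b ->
  box kp km (Phi v km b) /\ forall i, box kp km (v i *m b + Phi v km b).
Proof.
move=> H2 Hb.
have D0 : (0 : R) < d.+1%:R by rewrite ltr0n.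
split.
  move=> k; rewrite mxE.
  have [j Ej] := @mn_eq _ _ v b k.
  have S0 := @xv_sum0 _ _ v b k H2.
  have L1 : \sum_(i < d.+1) mn v b k <= \sum_i xv v b i k.
    by apply: ler_sum => i _; exact: mn_le.
  have L2 : \sum_(i < d.+1) (xv v b i k - xv v b j k) <= \sum_(i < d.+1) (kp k + km k).
    by apply: ler_sum => i _; exact: Hb.
  rewrite sumrB S0 !sumr_const card_ord sub0r -mulNrn ler_pMn2r // in L2.
  rewrite sumr_const card_ord S0 pmulrn_lle0 // in L1.
  rewrite Ej in L1 *.
  apply/andP; split; lra.
move=> i k; rewrite mxE [Phi _ _ _ _ _]mxE -/(xv v b i k).
have [j Ej] := @mn_eq _ _ v b k.
have := @mn_le _ _ v b k i; have := Hb k j i.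
rewrite Ej => h1 h2.
apply/andP; split; lra.
Qed.



Lemma B_compact {R : realType} d (v : 'I_d.+1 -> 'rV[R]_d) kp km :
  (forall i, 0 <= kp i) -> (forall i, 0 <= km i) ->
  (forall i j, i != j -> v i *m (v j)^T = (-1)%:M) ->
  \sum_(j < d.+1) v j = 0 ->
  \sum_(j < d.+1) (v j)^T *m v j = d.+1%:R%:M ->
  compact (Bset v kp km).
Proof.
move=> Hkp Hkm H1 H2 H3.
set N := \sum_(k' < d) \sum_(l < d.+1) \sum_(t' < d)
     (kp k' + km k') / d.+1%:R * `|v l ord0 t'|.
have -> : Bset v kp km = [set M : 'M[R]_d | forall i j, - N <= M i j <= N]
    `&` Bsp v kp km.
  apply/seteqP; split => b.
    move=> Hb; split; first exact: (@Bset_box _ _ _ _ _ _ Hkp Hkm Hb).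
    exact: (@Bset_Bsp _ _ _ _ _ _ H1 H2 Hb).
  by move=> [_ Hb]; exact: (@Bsp_Bset _ _ _ _ _ _ H1 H2 H3 Hb).
apply: compact_closedI; first exact: mx_box_compact.
exact: Bsp_closed.
Qed.

Theorem lemma3p5 (R : realType) (d : nat) (sigma : 'M[R]_d)
  (kp km : 'I_d -> R) (v : 'I_d.+1 -> 'rV[R]_d) :
  sigma \in unitmx ->
  (forall i, 0 <= kp i) -> (forall i, 0 <= km i) ->
  (forall i j, i != j -> v i *m (v j)^T = (-1)%:M) ->
  \sum_(j < d.+1) v j = 0 ->
  \sum_(j < d.+1) (v j)^T *m v j = d.+1%:R%:M ->
  (exists Psi : 'M[R]_d -> 'M[R]_d,
     borel_measurable_on (Gammaset sigma (Bset v kp km)) Psi /\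
     forall a, Gammaset sigma (Bset v kp km) a ->
       Bset v kp km (Psi a) /\
       a = sigma *m sigma^T + sigma *m Psi a + (Psi a)^T *m sigma^T) /\
  (exists Phi : 'M[R]_d -> 'rV[R]_d,
     borel_measurable_on (Bset v kp km) Phi /\
     forall beta, Bset v kp km beta ->
       box kp km (Phi beta) /\
       forall i, box kp km (v i *m beta + Phi beta)).
Proof.
move=> _ Hkp Hkm H1 H2 H3.
have cB := @B_compact _ _ _ _ _ Hkp Hkm H1 H2 H3.
split.
  have Hmid : forall x y, Bset v kp km x -> Bset v kp km y -> Tm sigma x = Tm sigma y ->
      Bset v kp km (2^-1 *: (x + y)) /\ Tm sigma (2^-1 *: (x + y)) = Tm sigma x.
    move=> x y Kx Ky Txy; split; last exact: Tm_mid.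
    apply: (@Bsp_Bset _ _ _ _ _ _ H1 H2 H3); apply: Bsp_mid.
      exact: (@Bset_Bsp _ _ _ _ _ _ H1 H2 Kx).
    exact: (@Bset_Bsp _ _ _ _ _ _ H1 H2 Ky).
  have [Psi [HM HP]] := @selection _ _ _ _ _ cB (@Tm_cont R d sigma) (@gq_cont R d) Hmid (@gq_strict R d).
  exists Psi; split; first exact: HM.
  move=> a Ha; have [KP TP] := HP a Ha; split => //.
exists (Phi v km); split.
  move=> V oV; apply: (@bs_setI R d).
    by apply: (@bs_closed R d); apply: compact_closed => //; exact: mx_hausdorff.
  apply: (@bs_open R d); apply: open_comp => //.
  by move=> x _; exact: Phi_cont.
move=> beta Hb; exact: (@Phi_box _ _ _ _ _ _ H2 (@Bset_Bsp _ _ _ _ _ _ H1 H2 Hb)).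
Qed.
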